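(* Let $\Gamma$ be a finite simple graph and let $K_n$ be the complete graph on $n$ vertices. If $\psi\colon A(K_n)\to A(\Gamma)$ is an injective homomorphism satisfying condition (KK), then there is a full embedding $\iota\colon K_n\to\Gamma$ with $\iota(V(K_n))\subset\mathrm{supp}(\psi)$.
   Context: $A(\Gamma) = \langle V(\Gamma) \mid uv=vu \text{ whenever } \{u,v\}\in E(\Gamma)\rangle$ is the right-angled Artin group; $A(K_n)\cong\mathbb{Z}^n$. A graph embedding is an injective vertex map preserving adjacency; it is full if it also preserves non-adjacency. The support $\mathrm{supp}(g)$ of $g\in A(\Gamma)$ is the set of vertices $v$ such that $v$ or $v^{-1}$ occurs in a (equivalently, any) shortest word representing $g$. For a homomorphism $\psi\colon A(\Lambda)\to A(\Gamma)$, $\mathrm{supp}(\psi)=\bigcup_{v\in V(\Lambda)}\mathrm{supp}(\psi(v))$. A homomorphism $\psi$ satisfies condition (KK) if for every $v\in V(\Lambda)$ the set $\mathrm{supp}(\psi(v))$ consists of mutually adjacent vertices of $\Gamma$. *)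

(* Defs.v *)
(* Right-angled Artin groups are modelled by words over
   signed generators together with the congruence generated by the
   defining relations (free reduction and commutation of adjacent letters). *)
From mathcomp Require Import all_boot.
From Stdlib Require Import Relations.Relation_Operators.
Set Implicit Arguments. Unset Strict Implicit. Unset Printing Implicit Defensive.

Section RAAG.
Variables (T : eqType) (e : rel T).

(* a letter (v, false) stands for v, (v, true) for v^-1 *)
Definition word := seq (T * bool).

Definition inv_word (w : word) : word := rev (map (fun p => (p.1, ~~ p.2)) w).

Inductive raag_step : word -> word -> Prop :=
| step_cancel a c x b :
    raag_step (a ++ [:: (x, b); (x, ~~ b)] ++ c) (a ++ c)
| step_comm a c x bx y b_y :
    e x y -> raag_step (a ++ [:: (x, bx); (y, b_y)] ++ c)
                       (a ++ [:: (y, b_y); (x, bx)] ++ c).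

Definition raag_eq : word -> word -> Prop := clos_refl_sym_trans word raag_step.

Definition shortest (w : word) : Prop :=
  forall w', raag_eq w w' -> size w <= size w'.

Definition in_supp (w : word) (v : T) : Prop :=
  exists w', raag_eq w w' /\ shortest w' /\ v \in map fst w'.
End RAAG.

Definition Kn_rel (n : nat) : rel 'I_n := fun i j => i != j.

(* A homomorphism A(Lambda) -> A(Gamma) is given by the images f v of the
   generators; it is extended to words. *)
Definition hom_word (S T : eqType) (f : S -> word T) (w : word S) : word T :=
  flatten (map (fun p => if p.2 then inv_word (f p.1) else f p.1) w).

Definition is_raag_hom (S T : eqType) (eL : rel S) (eG : rel T)
  (f : S -> word T) : Prop :=
  forall x y, eL x y -> raag_eq eG (f x ++ f y) (f y ++ f x).

Definition raag_hom_injective (S T : eqType) (eL : rel S) (eG : rel T)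
  (f : S -> word T) : Prop :=
  forall w1 w2, raag_eq eG (hom_word f w1) (hom_word f w2) -> raag_eq eL w1 w2.

Definition in_supp_hom (S T : eqType) (eG : rel T) (f : S -> word T) (v : T) :=
  exists x, in_supp eG (f x) v.

Definition cond_KK (S T : eqType) (eG : rel T) (f : S -> word T) : Prop :=
  forall x u v, in_supp eG (f x) u -> in_supp eG (f x) v -> u != v -> eG u v.

Definition full_embedding (S T : eqType) (eL : rel S) (eG : rel T)
  (iota : S -> T) : Prop :=
  injective iota /\ forall x y, eG (iota x) (iota y) = eL x y.

(* Main.v *)
Require Import Defs.
From mathcomp Require Import all_boot all_order all_algebra ring zify.
From Stdlib Require Import Relations.Relation_Operators Classical ClassicalEpsilon.
Set Implicit Arguments. Unset Strict Implicit. Unset Printing Implicit Defensive.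
Import Order.TTheory GRing.Theory Num.Theory.

Section Basic.
Variables (T : eqType) (e : rel T).
Notation req := (raag_eq e).

Lemma req_refl w : req w w. Proof. exact: rst_refl. Qed.
Lemma req_sym w1 w2 : req w1 w2 -> req w2 w1. Proof. exact: rst_sym. Qed.
Lemma req_trans w1 w2 w3 : req w1 w2 -> req w2 w3 -> req w1 w3.
Proof. exact: rst_trans. Qed.

Lemma step_catl p w1 w2 : raag_step e w1 w2 -> raag_step e (p ++ w1) (p ++ w2).
Proof.
case=> [a c x b|a c x bx y b_y exy].
  by move: (step_cancel e (p ++ a) c x b); rewrite -!catA.
by move: (step_comm (p ++ a) c bx b_y exy); rewrite -!catA.
Qed.

Lemma step_catr p w1 w2 : raag_step e w1 w2 -> raag_step e (w1 ++ p) (w2 ++ p).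
Proof.
case=> [a c x b|a c x bx y b_y exy].
  by move: (step_cancel e a (c ++ p) x b); rewrite -!catA.
by move: (step_comm a (c ++ p) bx b_y exy); rewrite -!catA.
Qed.

Lemma req_catl p w1 w2 : req w1 w2 -> req (p ++ w1) (p ++ w2).
Proof.
elim=> [x y h|x|x y _ h|x y z _ h1 _ h2].
- exact: rst_step (step_catl p h).
- exact: rst_refl.
- exact: rst_sym h.
- exact: rst_trans h1 h2.
Qed.

Lemma req_catr p w1 w2 : req w1 w2 -> req (w1 ++ p) (w2 ++ p).
Proof.
elim=> [x y h|x|x y _ h|x y z _ h1 _ h2].
- exact: rst_step (step_catr p h).
- exact: rst_refl.
- exact: rst_sym h.
- exact: rst_trans h1 h2.
Qed.

Lemma req_cat a a' b b' : req a a' -> req b b' -> req (a ++ b) (a' ++ b').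
Proof.
move=> h1 h2; apply: req_trans (req_catr b h1) _; exact: req_catl.
Qed.

Local Open Scope ring_scope.
Definition sgn (b : bool) : int := if b then -1 else 1.

Fixpoint ab (w : word T) (v : T) : int :=
  if w is l :: w' then (if l.1 == v then sgn l.2 else 0) + ab w' v else 0.

Lemma ab_cat w1 w2 v : ab (w1 ++ w2) v = ab w1 v + ab w2 v.
Proof. by elim: w1 => [|l w IH] /=; rewrite ?add0r // IH addrA. Qed.

Lemma ab_step w1 w2 v : raag_step e w1 w2 -> ab w1 v = ab w2 v.
Proof.
case=> [a c x b|a c x bx y b_y _]; rewrite !ab_cat /=.
  by case: (x == v); case: b => /=; rewrite ?addr0 ?add0r //= addrA;
     rewrite ?addNr ?subrr ?add0r.
by congr (_ + _); rewrite !addrA (addrC (if x == v then _ else _)).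
Qed.

Lemma ab_req w1 w2 v : req w1 w2 -> ab w1 v = ab w2 v.
Proof. by elim=> // [x y /(ab_step v)|x y z _ -> _ ->]. Qed.

End Basic.
Section Canon.
Variables (T : eqType) (e : rel T).
Notation req := (raag_eq e).
Local Open Scope ring_scope.

Definition block (x : T) (k : int) : word T := nseq `|k|%N (x, k < 0).
Definition canon (C : seq T) (g : T -> int) : word T :=
  flatten [seq block c (g c) | c <- C].

Lemma posz_lt0 (m : nat) : (Posz m < 0) = false. Proof. by []. Qed.
Lemma negz_lt0 (m : nat) : (Negz m < 0) = true. Proof. by []. Qed.
Lemma abs_posz (m : nat) : `|Posz m|%N = m. Proof. by []. Qed.
Lemma abs_negz (m : nat) : `|Negz m|%N = m.+1. Proof. by []. Qed.

Lemma block_cons x b k : req ((x, b) :: block x k) (block x (k + sgn b)).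
Proof.
rewrite /block; case: b.
- case: k => [[|m]|m].
  + rewrite (_ : Posz 0 + sgn true = Negz 0) //; exact: req_refl.
  + rewrite (_ : Posz m.+1 + sgn true = Posz m); last by rewrite /sgn; lia.
    rewrite !abs_posz !posz_lt0 /=.
    exact: rst_step (step_cancel e [::] (nseq m (x, false)) x true).
  + rewrite (_ : Negz m + sgn true = Negz m.+1); last by rewrite /sgn; lia.
    rewrite !abs_negz !negz_lt0; exact: req_refl.
- case: k => [m|[|m]].
  + rewrite (_ : Posz m + sgn false = Posz m.+1); last by rewrite /sgn; lia.
    rewrite !abs_posz !posz_lt0; exact: req_refl.
  + rewrite (_ : Negz 0 + sgn false = Posz 0) // abs_negz negz_lt0.
    exact: rst_step (step_cancel e [::] [::] x false).
  + rewrite (_ : Negz m.+1 + sgn false = Negz m); last by rewrite /sgn; lia.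
    rewrite !abs_negz !negz_lt0 /=.
    exact: rst_step (step_cancel e [::] (nseq m.+1 (x, true)) x false).
Qed.

Lemma move_past x b u : all (fun l => e x l.1) u ->
  req ((x, b) :: u) (u ++ [:: (x, b)]).
Proof.
elim: u => [|[y yb] u IH] /=; first by move=> _; exact: req_refl.
case/andP=> exy hu.
apply: req_trans (_ : req [:: (y, yb), (x, b) & u] _).
  have := step_comm [::] u b yb exy; rewrite /= => h; exact: rst_step h.
exact: (req_catl [:: (y, yb)] (IH hu)).
Qed.

Lemma canon_ext C g1 g2 : {in C, g1 =1 g2} -> canon C g1 = canon C g2.
Proof.
by move=> h; rewrite /canon; congr flatten; apply/eq_in_map => c /h ->.
Qed.

Definition clique (C : seq T) := {in C &, forall u v, u != v -> e u v}.

Lemma canonE c C g : canon (c :: C) g = block c (g c) ++ canon C g.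
Proof. by []. Qed.

Lemma canon_cons C g x b : uniq C -> clique C -> x \in C ->
  req ((x, b) :: canon C g)
      (canon C (fun v => (if x == v then sgn b else 0) + g v)).
Proof.
elim: C => [|c C IH] //= /andP[cC uC] clC.
have clC' : clique C.
  by move=> u v hu hv; apply: clC; rewrite inE ?hu ?hv orbT.
rewrite inE !canonE; case: (eqVneq x c) => [xc _ | xc /= xC].
- subst c; cbv beta.
  have -> : canon C (fun v => (if x == v then sgn b else 0) + g v) = canon C g.
    apply: canon_ext => v vC; case: (eqVneq x v) => [xv|]; last by rewrite add0r.
    by rewrite xv vC in cC.
  rewrite addrC.
  exact: (req_catr _ (block_cons x b (g x))).
- cbv beta; rewrite add0r.
  apply: req_trans (_ : req (block c (g c) ++ (x, b) :: canon C g) _).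
    rewrite -cat1s catA (_ : block c (g c) ++ (x, b) :: canon C g = (block c (g c) ++ [:: (x, b)]) ++ canon C g); last by rewrite -catA.
    apply: req_catr; apply: move_past; apply/allP => l /nseqP [-> _] /=.
    by apply: clC; rewrite ?inE ?eqxx ?xC ?orbT.
  exact: req_catl (IH uC clC' xC).
Qed.

Lemma canon0 C : canon C (fun _ => 0) = [::].
Proof. by elim: C. Qed.

Lemma canon_req C w : uniq C -> clique C -> all (fun l => l.1 \in C) w ->
  req w (canon C (ab w)).
Proof.
move=> uC clC; elim: w => [|[x b] w IH] /=.
  by move=> _; have -> : canon C (ab [::]) = [::] := canon0 C; exact: req_refl.
case/andP=> xC hw.
apply: req_trans (_ : req ((x, b) :: canon C (ab w)) _).
  exact: (req_catl [:: (x, b)] (IH hw)).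
exact: canon_cons.
Qed.

Lemma size_canon C g : size (canon C g) = (\sum_(c <- C) `|g c|)%N.
Proof. by elim: C => [|c C IH]; rewrite ?big_nil ?big_cons //= size_cat size_nseq IH. Qed.

End Canon.

Section Count.
Variables (T : eqType) (e : rel T).
Notation req := (raag_eq e).
Local Open Scope ring_scope.

Lemma abs_ab_le (w : word T) c : (`|ab w c| <= count (fun l => l.1 == c) w)%N.
Proof.
elim: w => [|[x b] w IH] //=.
case: (x == c); case: b; rewrite /sgn /=; lia.
Qed.

Lemma sum_eq1 (C : seq T) x : x \in C -> uniq C ->
  (\sum_(c <- C) (x == c) = 1)%N.
Proof.
move=> xC uC; rewrite (bigD1_seq x) //= eqxx big1 // => c cx.
by rewrite eq_sym (negbTE cx).
Qed.

Lemma size_count (C : seq T) (w : word T) : uniq C -> all (fun l => l.1 \in C) w ->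
  size w = (\sum_(c <- C) count (fun l => l.1 == c) w)%N.
Proof.
move=> uC; elim: w => [|l w IH] /=; first by rewrite big1.
case/andP=> lC hw; rewrite big_split /= sum_eq1 // -IH //.
Qed.

Lemma shortest_ab_neq0 (w : word T) (C : seq T) : shortest e w -> uniq C ->
  clique e C -> all (fun l => l.1 \in C) w ->
  forall a, a \in map fst w -> ab w a != 0.
Proof.
move=> sw uC clC hw a aw; apply/negP => /eqP ha.
have := sw _ (canon_req uC clC hw); rewrite size_canon.
have aC : a \in C.
  by case/mapP: aw => l lw ->; move/allP: hw => /(_ l lw).
have cpos : (0 < count (fun l => l.1 == a) w)%N.
  rewrite -has_count; apply/hasP; case/mapP: aw => l lw ->; by exists l.
rewrite (size_count uC hw) !(bigD1_seq a) //= ha /=.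
have : (\sum_(i <- C | i != a) `|ab w i| <= \sum_(i <- C | i != a) count (fun l => l.1 == i) w)%N.
  by apply: leq_sum => i _; exact: abs_ab_le.
lia.
Qed.

End Count.

Section Eval.
Variables (T : eqType) (e : rel T).
Notation req := (raag_eq e).
Local Open Scope ring_scope.
Variables (a b : T).
Hypotheses (ab_ne : a != b) (nab : ~~ e a b) (nba : ~~ e b a)
  (naa : ~~ e a a) (nbb : ~~ e b b).

Definition mat := (int * int * int * int)%type.
Definition mmul (m1 m2 : mat) : mat :=
  let: (p, q, r, s) := m1 in let: (p', q', r', s') := m2 in
  (p * p' + q * r', p * q' + q * s', r * p' + s * r', r * q' + s * s').
Definition mI : mat := (1, 0, 0, 1).
Arguments mmul : simpl never.

Lemma mmulA m1 m2 m3 : mmul m1 (mmul m2 m3) = mmul (mmul m1 m2) m3.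
Proof.
case: m1 => [[[p q] r] s]; case: m2 => [[[p' q'] r'] s'];
case: m3 => [[[p'' q''] r''] s''] /=; congr (_, _, _, _); ring.
Qed.

Lemma mul1m m : mmul mI m = m.
Proof. case: m => [[[p q] r] s] /=; congr (_, _, _, _); ring. Qed.
Lemma mulm1 m : mmul m mI = m.
Proof. case: m => [[[p q] r] s] /=; congr (_, _, _, _); ring. Qed.

Definition img (l : T * bool) : mat :=
  if l.1 == a then (1, sgn l.2, 0, 1)
  else if l.1 == b then (1, 0, sgn l.2, 1) else mI.

Definition evalw (w : word T) : mat := foldr (fun l acc => mmul (img l) acc) mI w.

Lemma evalw_cat w1 w2 : evalw (w1 ++ w2) = mmul (evalw w1) (evalw w2).
Proof. elim: w1 => [|l w IH] /=; first by rewrite mul1m. by rewrite IH mmulA. Qed.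

Lemma img_inv x bx : mmul (img (x, bx)) (img (x, ~~ bx)) = mI.
Proof.
rewrite /img /=; case: (x == a); last case: (x == b); rewrite ?mul1m //=;
case: bx; rewrite /sgn /mI /=; congr (_, _, _, _); ring.
Qed.

Lemma img_comm x bx y yb : e x y ->
  mmul (img (x, bx)) (img (y, yb)) = mmul (img (y, yb)) (img (x, bx)).
Proof.
move=> exy; rewrite /img /=.
case: (eqVneq x a) => [xa|xa].
  subst x; case: (eqVneq y a) => [ya|ya]; first by subst y; move: (naa); rewrite exy.
  case: (eqVneq y b) => [yb'|yb']; first by subst y; move: (nab); rewrite exy.
  by rewrite mul1m mulm1.
case: (eqVneq x b) => [xb|xb].
  subst x; case: (eqVneq y a) => [ya|ya]; first by subst y; move: (nba); rewrite exy.
  case: (eqVneq y b) => [yb'|yb']; first by subst y; move: (nbb); rewrite exy.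
  by rewrite mul1m mulm1.
by rewrite mul1m mulm1.
Qed.

Lemma evalw_step w1 w2 : raag_step e w1 w2 -> evalw w1 = evalw w2.
Proof.
case=> [p c x bx|p c x bx y yb exy]; rewrite !evalw_cat /=.
  by rewrite !mulm1 img_inv mul1m.
by rewrite !mulm1 img_comm.
Qed.

Lemma evalw_req w1 w2 : req w1 w2 -> evalw w1 = evalw w2.
Proof. by elim=> // [x y /evalw_step|x y z _ -> _ ->]. Qed.

Lemma evalw_a w : b \notin map fst w -> evalw w = (1, ab w a, 0, 1).
Proof.
elim: w => [|[x bx] w IH] //=; rewrite inE negb_or => /andP[bx' /IH ->].
rewrite /img /=; case: (eqVneq x a) => [xa|xa] /=.
  by rewrite /mmul; congr (_, _, _, _); ring.
by rewrite eq_sym (negbTE bx') mul1m add0r.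
Qed.

Lemma evalw_b w : a \notin map fst w -> evalw w = (1, 0, ab w b, 1).
Proof.
elim: w => [|[x bx] w IH] //=; rewrite inE negb_or => /andP[ax' /IH ->].
rewrite /img /= eq_sym (negbTE ax'); case: (eqVneq x b) => [xb|xb] /=.
  by rewrite /mmul; congr (_, _, _, _); ring.
by rewrite mul1m add0r.
Qed.

Lemma noncomm w1 w2 : b \notin map fst w1 -> a \notin map fst w2 ->
  req (w1 ++ w2) (w2 ++ w1) -> ab w1 a * ab w2 b = 0.
Proof.
move=> h1 h2 /evalw_req; rewrite !evalw_cat evalw_a // evalw_b //= => [[]].
move=> h _ _ _; apply: (addrI (1 * 1)); by rewrite h mul0r.
Qed.

End Eval.

Section LinAlg.
Local Open Scope ring_scope.

Lemma int_dep (n m : nat) (a : 'I_n -> 'I_m -> int) : (m < n)%N ->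
  exists c : 'I_n -> int, (exists i, c i != 0) /\
    forall j, \sum_(i < n) c i * a i j = 0.
Proof.
move=> mn.
pose A : 'M[rat]_(n, m) := \matrix_(i, j) (a i j)%:~R.
have hk : kermx A != 0.
  rewrite -mxrank_eq0 mxrank_ker; have := rank_leq_col A; lia.
have [k hk'] : exists k, row k (kermx A) != 0.
  apply: NNPP => H; move/eqP: hk; apply; apply/row_matrixP => k.
  rewrite row0; apply/eqP; apply: NNPP => H'; apply: H; exists k; exact/negP.
set r := row k (kermx A) in hk'.
have rA : r *m A = 0 by rewrite /r -row_mul mulmx_ker row0.
have [i0 hi0] : exists i, r 0 i != 0.
  apply: NNPP => H; move/eqP: hk'; apply; apply/matrixP => x y.
  rewrite (ord1 x) [RHS]mxE; apply/eqP; apply: NNPP => H'; apply: H; exists y; exact/negP.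
pose c i := numq (r 0 i) * \prod_(j | j != i) denq (r 0 j).
pose D : int := \prod_j denq (r 0 j).
have cE i : (c i)%:~R = r 0 i * D%:~R :> rat.
  by rewrite /c /D [in RHS](bigD1 i) //= !intrM numqE mulrA.
exists c; split.
  exists i0; rewrite /c mulf_neq0 ?numq_eq0 //.
  by apply/prodf_neq0 => j _; rewrite denq_neq0.
move=> j; apply/eqP; rewrite -(intr_eq0 rat) (big_morph (fun z : int => z%:~R : rat) (@intrD rat) (erefl _)).
have : (r *m A) 0 j = 0 by rewrite rA mxE.
rewrite mxE => h.
rewrite (eq_bigr (fun i => (r 0 i * A i j) * D%:~R)); last first.
  by move=> i _; rewrite intrM cE !mxE mulrAC.
by rewrite -mulr_suml h mul0r.
Qed.

End LinAlg.

Section Words.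
Local Open Scope ring_scope.

Lemma exists_shortest (T : eqType) (e : rel T) (w : word T) :
  exists w', raag_eq e w w' /\ shortest e w'.
Proof.
move: {2}(size w) (leqnn (size w)) => k; elim: k w => [|k IH] w hw;
  (case: (classic (shortest e w)) => [sw|nsw];
    [by exists w; split=> //; exact: req_refl|]);
  (have [w'' [h1 h2]] : exists w'', raag_eq e w w'' /\ (size w'' < size w)%N;
    [apply: NNPP => H; apply: nsw => w'' h; apply: NNPP => h'; apply: H;
     exists w''; split=> //; rewrite ltnNge; exact/negP|]).
- by move: hw h2; lia.
- have [w3 [h3 h4]] : exists w', raag_eq e w'' w' /\ shortest e w'.
    by apply: IH; move: hw h2; lia.
  by exists w3; split=> //; exact: req_trans h1 h3.
Qed.

Lemma hom_word_cat (S T : eqType) (g : S -> word T) w1 w2 :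
  hom_word g (w1 ++ w2) = hom_word g w1 ++ hom_word g w2.
Proof. by rewrite /hom_word map_cat flatten_cat. Qed.

Lemma hom_word_nseq (S T : eqType) (g : S -> word T) i m :
  hom_word g (nseq m (i, false)) = flatten (nseq m (g i)).
Proof. by elim: m => //= m IH; rewrite -IH. Qed.

Lemma req_flatten_nseq (T : eqType) (e : rel T) x y m :
  raag_eq e x y -> raag_eq e (flatten (nseq m x)) (flatten (nseq m y)).
Proof.
move=> h; elim: m => [|m IH] /=; first exact: req_refl.
exact: req_cat h IH.
Qed.

Lemma ab_flatten_nseq (T : eqType) (x : word T) m v :
  ab (flatten (nseq m x)) v = m%:Z * ab x v.
Proof.
elim: m => [|m IH] /=; first by rewrite mul0r.
by rewrite ab_cat IH -[m.+1]addn1 PoszD mulrDl mul1r addrC.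
Qed.

Lemma ab_nseq (T : eqType) (i j : T) m :
  ab (nseq m (i, false)) j = if i == j then m%:Z else 0.
Proof.
elim: m => [|m IH] /=; first by case: (i == j).
rewrite IH; case: (i == j); rewrite /sgn ?addr0 //; lia.

Qed.

Lemma all_flatten_nseq (T : Type) (P : pred T) x m :
  all P x -> all P (flatten (nseq m x)).
Proof. by move=> h; elim: m => //= m IH; rewrite all_cat h IH. Qed.

End Words.

Local Open Scope ring_scope.

Theorem lemma3p4 (T : finType) (e : rel T) (n : nat) (f : 'I_n -> word T) :
  symmetric e -> irreflexive e ->
  is_raag_hom (@Kn_rel n) e f ->
  raag_hom_injective (@Kn_rel n) e f ->
  cond_KK e f ->
  exists iota : 'I_n -> T,
    full_embedding (@Kn_rel n) e iota /\ (forall i, in_supp_hom e f (iota i)).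
Proof.
move=> esym eirr hom inj KK.
have ex i := exists_shortest e (f i).
pose wv i := proj1_sig (constructive_indefinite_description _ (ex i)).
have hwv i : raag_eq e (f i) (wv i) /\ shortest e (wv i)
  := proj2_sig (constructive_indefinite_description _ (ex i)).
have supp i v : v \in map fst (wv i) -> in_supp e (f i) v.
  by move=> hv; exists (wv i); have [h1 h2] := hwv i.
have cl i : clique e (undup (map fst (wv i))).
  move=> u v; rewrite !mem_undup => hu hv uv; exact: KK (supp i u hu) (supp i v hv) uv.
have nz i v : v \in map fst (wv i) -> ab (wv i) v != 0.
  apply: (shortest_ab_neq0 (hwv i).2 (undup_uniq _) (cl i)).
  by apply/allP => l hl; rewrite mem_undup; apply/mapP; exists l.
have cross i j u v : u \in map fst (wv i) -> v \in map fst (wv j) -> u != v -> e u v.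
  move=> hu hv uv; case: (eqVneq i j) => [eij|ij].
    by subst j; exact: KK (supp i u hu) (supp i v hv) uv.
  apply/negPn/negP => nuv.
  have nvu : ~~ e v u by rewrite esym.
  have vi : v \notin map fst (wv i).
    by apply/negP => hv'; rewrite (KK _ _ _ (supp i u hu) (supp i v hv') uv) in nuv.
  have uj : u \notin map fst (wv j).
    by apply/negP => hu'; rewrite (KK _ _ _ (supp j u hu') (supp j v hv) uv) in nuv.
  have hc : raag_eq e (wv i ++ wv j) (wv j ++ wv i).
    apply: req_trans (req_cat (req_sym (hwv i).1) (req_sym (hwv j).1)) _.
    apply: req_trans (hom i j ij) _.
    exact: req_cat (hwv j).1 (hwv i).1.
  have nuu : ~~ e u u by rewrite eirr.
  have nvv : ~~ e v v by rewrite eirr.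
  have := noncomm nuv nvu nuu nvv vi uj hc.
  move/eqP; rewrite mulf_eq0 => /orP[] /eqP h.
    by move: (nz i u hu); rewrite h eqxx.
  by move: (nz j v hv); rewrite h eqxx.
pose S := undup (flatten [seq map fst (wv i) | i <- enum 'I_n]).
have memS v : v \in S -> exists i, v \in map fst (wv i).
  rewrite mem_undup => /flattenP [s /mapP [i _ ->] hv]; by exists i.
have Smem i v : v \in map fst (wv i) -> v \in S.
  move=> hv; rewrite mem_undup; apply/flattenP; exists (map fst (wv i)) => //.
  by apply/mapP; exists i; rewrite ?mem_enum.
have uS : uniq S by exact: undup_uniq.
have clS : clique e S.
  move=> u v /memS [i hu] /memS [j hv]; exact: cross hu hv.
have hsize : (n <= size S)%N.
  rewrite leqNgt; apply/negP => hlt.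
  pose sS := in_tuple S.
  have [c [[i0 ci0] hc]] := int_dep (fun i (jj : 'I_(size S)) => ab (wv i) (tnth sS jj)) hlt.
  pose kp i := if 0 <= c i then `|c i|%N else 0%N.
  pose kn i := if c i < 0 then `|c i|%N else 0%N.
  have kpn i : (kp i)%:Z - (kn i)%:Z = c i.
    rewrite /kp /kn; case: ifP; case: ifP; lia.
  pose W (k : 'I_n -> nat) (s : seq 'I_n) : word 'I_n :=
    flatten [seq nseq (k i) (i, false) | i <- s].
  pose Wi (k : 'I_n -> nat) (s : seq 'I_n) : word T :=
    flatten [seq flatten (nseq (k i) (wv i)) | i <- s].
  have hW k s : raag_eq e (hom_word f (W k s)) (Wi k s).
    elim: s => [|i s IH]; first exact: req_refl.
    rewrite /W /Wi /= hom_word_cat hom_word_nseq.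
    exact: req_cat (req_flatten_nseq _ (hwv i).1) IH.
  have abW k s j : ab (W k s) j = \sum_(i <- s) (if i == j then (k i)%:Z else 0).
    elim: s => [|i s IH]; first by rewrite big_nil.
    by rewrite /W /= ab_cat ab_nseq -/(W k s) IH big_cons.
  have abWi k s v : ab (Wi k s) v = \sum_(i <- s) (k i)%:Z * ab (wv i) v.
    elim: s => [|i s IH]; first by rewrite big_nil.
    by rewrite /Wi /= ab_cat ab_flatten_nseq -/(Wi k s) IH big_cons.
  have allWi k s : all (fun l => l.1 \in S) (Wi k s).
    elim: s => [|i s IH] //=; rewrite all_cat IH andbT.
    apply: all_flatten_nseq; apply/allP => l hl; apply: (Smem i).
    by apply/mapP; exists l.
  have heq : raag_eq e (hom_word f (W kp (enum 'I_n))) (hom_word f (W kn (enum 'I_n))).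
    apply: req_trans (hW _ _) _; apply: req_trans _ (req_sym (hW _ _)).
    apply: req_trans (canon_req uS clS (allWi _ _)) _.
    apply: req_trans _ (req_sym (canon_req uS clS (allWi _ _))).
    rewrite (canon_ext (g2 := ab (Wi kn (enum 'I_n)))); first exact: req_refl.
    move=> v vS; rewrite !abWi; apply/eqP; rewrite -subr_eq0 -sumrB.
    have [jj ->] : exists jj, v = tnth sS jj by apply/tnthP.
    rewrite enumT; apply/eqP; rewrite -[RHS](hc jj); apply: eq_bigr => i _.
    by rewrite -mulrBl kpn.
  have := ab_req i0 (inj _ _ heq); rewrite !abW enumT.
  rewrite -!big_mkcond !big_pred1_eq => hk.
  by move: ci0; rewrite -kpn hk subrr eqxx.
pose sS := in_tuple S.
have tinj : injective (tnth sS) by apply/tuple_uniqP.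
have winj : injective (widen_ord hsize).
  by move=> x y /(congr1 val) /= /val_inj.
exists (fun i => tnth sS (widen_ord hsize i)); split; last first.
  move=> i; have /memS [j hj] : tnth sS (widen_ord hsize i) \in S by apply: mem_tnth.
  by exists j; apply: supp.
split.
  by move=> x y /tinj /winj.
move=> x y; rewrite /Kn_rel; case: (eqVneq x y) => [->|xy]; first by rewrite eirr.
apply: clS; try exact: mem_tnth.
apply/negP => /eqP /tinj /winj hxy; by rewrite hxy eqxx in xy.
Qed.
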